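(* Let $V\subseteq\mathcal{V}$ be a set of interpretations and consider $\sigma\in\{\mathrm{adm},\mathrm{com},\mathrm{mod}\}$. There is an ADF $D$ such that $\sigma(D)=V$ if and only if there is a $\sigma$-characterization for $V$.
   Context: Let $A$ be a fixed finite set of statements. An interpretation is a mapping $v:A\to\{\mathbf{t},\mathbf{f},\mathbf{u}\}$; $\mathcal{V}$ is the set of all interpretations and $\mathcal{V}_2$ the set of two-valued ones. The information ordering is $\mathbf{u}<_i\mathbf{t}$, $\mathbf{u}<_i\mathbf{f}$, extended pointwise. For $v\in\mathcal{V}$, $[v]_2$ is the set of two-valued interpretations $w$ with $v\leq_i w$. An ADF is $D=(A,L,C)$ where each statement $a$ has an acceptance formula $\varphi_a$ over its parents. The operator $\Gamma_D$ maps $v$ to the interpretation assigning to each $a$ the greatest lower bound w.r.t. $\leq_i$ (consensus: $\mathbf{t}$ if all are $\mathbf{t}$, $\mathbf{f}$ if all are $\mathbf{f}$, otherwise $\mathbf{u}$) of $\{w(\varphi_a)\mid w\in[v]_2\}$. $v$ is admissible iff $v\leq_i\Gamma_D(v)$, complete iff $\Gamma_D(v)=v$, a two-valued model iff it is two-valued and $\Gamma_D(v)=v$; these sets are $\mathrm{adm}(D),\mathrm{com}(D),\mathrm{mod}(D)$. For $f:\mathcal{V}_2\to\mathcal{V}_2$: - $f$ is an adm-characterization of $V$ iff for each $v\in\mathcal{V}$: $v\in V$ iff for every $a\in A$, $v(a)\neq\mathbf{u}$ implies $f(v_2)(a)=v(a)$ for all $v_2\in[v]_2$. - $f$ is a com-characterization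 of $V$ iff for each $v\in\mathcal{V}$: $v\in V$ iff for every $a\in A$, $v(a)\neq\mathbf{u}$ implies $f(v_2)(a)=v(a)$ for all $v_2\in[v]_2$, and $v(a)=\mathbf{u}$ implies $f(v_2')(a)=\mathbf{t}$ and $f(v_2'')(a)=\mathbf{f}$ for some $v_2',v_2''\in[v]_2$. - $f$ is a mod-characterization of $V$ iff $V\subseteq\mathcal{V}_2$ and for each $v\in\mathcal{V}_2$, $v\in V$ iff $f(v)=v$. *)

(* Defs.v *)
From mathcomp Require Import all_boot.
Set Implicit Arguments. Unset Strict Implicit. Unset Printing Implicit Defensive.

Definition tv := option bool.
Notation vt := (Some true).
Notation vf := (Some false).
Notation vu := (@None bool).

Section ADF.
Variable A : finType.

Definition interp := {ffun A -> tv}.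
Definition interp2 := {ffun A -> bool}.

Definition to3 (w : interp2) : interp := [ffun a => Some (w a)].

Definition leq_i (v v' : interp) : bool :=
  [forall a, (v a != vu) ==> (v a == v' a)].

Definition ext2 (v : interp) (w : interp2) : bool := leq_i v (to3 w).

Inductive formula : Type :=
| FAtom of A
| FTop
| FBot
| FNeg of formula
| FAnd of formula & formula
| FOr of formula & formula
| FImp of formula & formula.

Fixpoint feval (w : interp2) (phi : formula) : bool :=
  match phi with
  | FAtom a => w a
  | FTop => true
  | FBot => false
  | FNeg p => ~~ feval w p
  | FAnd p q => feval w p && feval w q
  | FOr p q => feval w p || feval w q
  | FImp p q => feval w p ==> feval w q
  end.

Fixpoint atoms (phi : formula) : seq A :=
  match phi with
  | FAtom a => [:: a]
  | FTop | FBot => [::]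
  | FNeg p => atoms p
  | FAnd p q | FOr p q | FImp p q => atoms p ++ atoms q
  end.

(* An ADF D = (A, L, C): links L (L b a means (b,a) \in L, i.e. b is a parent
   of a) and, for each statement a, an acceptance formula over its parents. *)
Record ADF : Type := MkADF {
  links : rel A;
  acc : A -> formula;
  acc_parents : forall a b, b \in atoms (acc a) -> links b a
}.

(* Consensus (glb w.r.t. <=_i) of {w(phi) | w \in [v]_2}. *)
Definition Gamma (D : ADF) (v : interp) : interp :=
  [ffun a =>
     if [forall w : interp2, ext2 v w ==> feval w (acc D a)] then vt
     else if [forall w : interp2, ext2 v w ==> ~~ feval w (acc D a)] then vf
     else vu].

Definition two_valued (v : interp) : bool := [forall a, v a != vu].

Definition adm (D : ADF) : {set interp} := [set v | leq_i v (Gamma D v)].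
Definition com (D : ADF) : {set interp} := [set v | Gamma D v == v].
Definition mod (D : ADF) : {set interp} :=
  [set v | two_valued v && (Gamma D v == v)].

Definition adm_char (f : interp2 -> interp2) (V : {set interp}) : Prop :=
  forall v : interp, v \in V <->
    (forall a, v a != vu -> forall w, ext2 v w -> Some (f w a) = v a).

Definition com_char (f : interp2 -> interp2) (V : {set interp}) : Prop :=
  forall v : interp, v \in V <->
    (forall a,
       (v a != vu -> forall w, ext2 v w -> Some (f w a) = v a) /\
       (v a = vu -> (exists w', ext2 v w' /\ f w' a = true) /\
                    (exists w'', ext2 v w'' /\ f w'' a = false))).

Definition mod_char (f : interp2 -> interp2) (V : {set interp}) : Prop :=
  (forall v, v \in V -> two_valued v) /\
  (forall w : interp2, to3 w \in V <-> f w = w).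

End ADF.

Inductive semantics := Adm | Com | Mod.

Definition sem (A : finType) (s : semantics) (D : ADF A) : {set interp A} :=
  match s with Adm => adm D | Com => com D | Mod => mod D end.

Definition is_char (A : finType) (s : semantics) (f : interp2 A -> interp2 A)
  (V : {set interp A}) : Prop :=
  match s with Adm => adm_char f V | Com => com_char f V | Mod => mod_char f V end.

(* Main.v *)
Require Import Defs.
From mathcomp Require Import all_boot.
Set Implicit Arguments. Unset Strict Implicit. Unset Printing Implicit Defensive.

Section S.
Variable A : finType.

Definition Padm (g : interp2 A -> A -> bool) (v : interp A) : Prop :=
  forall a, v a != vu -> forall w, ext2 v w -> Some (g w a) = v a.
Definition Pcom (g : interp2 A -> A -> bool) (v : interp A) : Prop :=
  forall a,
       (v a != vu -> forall w, ext2 v w -> Some (g w a) = v a) /\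
       (v a = vu -> (exists w', ext2 v w' /\ g w' a = true) /\
                    (exists w'', ext2 v w'' /\ g w'' a = false)).
Definition Pmod (g : interp2 A -> A -> bool) (v : interp A) : Prop :=
  two_valued v /\ forall w, v = to3 w -> forall a, g w a = w a.

Definition P (s : semantics) := match s with Adm => Padm | Com => Pcom | Mod => Pmod end.

Lemma ext2P (v : interp A) w : ext2 v w <-> forall a, v a != vu -> v a = Some (w a).
Proof.
rewrite /ext2 /leq_i; split.
- move/forallP=> H a Ha; move: (H a); rewrite Ha /= ffunE => /eqP //.
- move=> H; apply/forallP=> a; apply/implyP=> Ha; rewrite ffunE; apply/eqP; exact: H.
Qed.

Lemma ext2_ex (v : interp A) : exists w, ext2 v w.
Proof.
exists [ffun a => if v a is Some b then b else true]; apply/ext2P=> a.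
by rewrite ffunE; case: (v a).
Qed.

Lemma ext2_to3 (w0 w : interp2 A) : ext2 (to3 w0) w <-> w = w0.
Proof.
split.
- move/ext2P=> H; apply/ffunP=> a; have := H a; rewrite /to3 ffunE => /(_ isT) [->] //.
- by move=> ->; apply/ext2P=> a; rewrite /to3 ffunE.
Qed.

Lemma to3_two (w : interp2 A) : two_valued (to3 w).
Proof. by apply/forallP=> a; rewrite ffunE. Qed.

Lemma two_to3 (v : interp A) : two_valued v -> exists w, v = to3 w.
Proof.
move/forallP=> H; exists [ffun a => if v a is Some b then b else true].
apply/ffunP=> a; rewrite !ffunE; move: (H a); by case: (v a).
Qed.

Lemma P_ext s g1 g2 v : g1 =2 g2 -> P s g1 v <-> P s g2 v.
Proof.
move=> E; case: s => /=.
- by rewrite /Padm; split=> H a Ha w Hw; [rewrite -E | rewrite E]; apply: H.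
- rewrite /Pcom; split=> H a; (case: (H a) => H1 H2; split;
  [move=> Ha w Hw; move: (H1 Ha w Hw); by rewrite E |
   move=> Ha; case: (H2 Ha) => [[w' [? ?]] [w'' [? ?]]]; split;
     [exists w' | exists w'']; split=> //; by rewrite ?E // -?E]).
- rewrite /Pmod; split=> -[H1 H2]; split=> // w Hw a; move: (H2 w Hw a); by rewrite ?E // -?E.
Qed.

Definition gD (D : ADF A) : interp2 A -> A -> bool := fun w a => feval w (acc D a).

Lemma GammaE (D : ADF A) v a :
  (Gamma D v a = vt <-> forall w, ext2 v w -> feval w (acc D a)) /\
  (Gamma D v a = vf <-> forall w, ext2 v w -> ~~ feval w (acc D a)) /\
  (Gamma D v a = vu <-> (exists w', ext2 v w' /\ feval w' (acc D a) = true) /\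
                       (exists w'', ext2 v w'' /\ feval w'' (acc D a) = false)).
Proof.
have [w0 Hw0] := ext2_ex v.
rewrite /Gamma ffunE.
case: (boolP [forall w, _ ==> _]) => [/forallP T|nT].
- split; first by split=> // _ w Hw; exact: (implyP (T w)).
  split; first by split=> // H; move: (H w0 Hw0) (implyP (T w0) Hw0) => /negbTE ->.
  split=> // -[_ [w [Hw Hf]]]; by move: (implyP (T w) Hw); rewrite Hf.
case: (boolP [forall w, _ ==> _]) => [/forallP F|nF].
- split; first by split=> // H; move: (H w0 Hw0) (implyP (F w0) Hw0) => ->.
  split; first by split=> // _ w Hw; exact: (implyP (F w) Hw).
  split=> // -[[w [Hw Hf]] _]; by move: (implyP (F w) Hw); rewrite Hf.
split; first (split=> // H; case/negP: nT; apply/forallP => w; apply/implyP; exact: H).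
split; first (split=> // H; case/negP: nF; apply/forallP => w; apply/implyP; exact: H).
split=> // _; split.
- move/forallPn: nF => [w]; rewrite negb_imply negbK => /andP [Hw Hf].
  by exists w.
- move/forallPn: nT => [w]; rewrite negb_imply => /andP [Hw Hf].
  by exists w; split=> //; apply/negbTE.
Qed.

Lemma key s (D : ADF A) v : v \in sem s D <-> P s (gD D) v.
Proof.
case: s => /=.
- rewrite /adm inE /leq_i /Padm /gD; split.
  + move/forallP=> H a Ha w Hw; move: (implyP (H a) Ha) => /eqP.
    case E: (v a) Ha => [[]|] // _ E2; symmetry in E2; have [[H1 _] [[H2 _] _]] := GammaE D v a.
    * by rewrite (H1 E2 w Hw).
    * by move: (H2 E2 w Hw) => /negbTE ->.
  + move=> H; apply/forallP=> a; apply/implyP=> Ha; apply/eqP.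
    have [[_ H1] [[_ H2] _]] := GammaE D v a.
    case E: (v a) Ha (H a Ha) => [[]|] // _ H'.
    * by rewrite H1 // => w Hw; case: (H' w Hw).
    * by rewrite H2 // => w Hw; case: (H' w Hw) => ->.
- rewrite /com inE /Pcom /gD; split.
  + move/eqP=> E a; have [[H1 _] [[H2 _] [H3 _]]] := GammaE D v a; split.
    * move=> Ha w Hw; rewrite -E in Ha *; case E2: (Gamma D v a) Ha => [[]|] // _.
      -- by rewrite (H1 E2 w Hw).
      -- by move: (H2 E2 w Hw) => /negbTE ->.
    * by move=> Hu; apply: H3; rewrite E.
  + move=> H; apply/eqP/ffunP=> a; have [[_ H1] [[_ H2] [_ H3]]] := GammaE D v a.
    case: (H a) => Ha Hu; case E: (v a) Ha Hu => [[]|] H' Hu'.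
    * by apply: H1 => w Hw; case: (H' isT w Hw).
    * by apply: H2 => w Hw; case: (H' isT w Hw) => ->.
    * by apply: H3; apply: Hu'.
- rewrite /mod inE /Pmod /gD; split.
  + case/andP=> T /eqP E; split=> // w Ew a.
    have [[H1 _] [[H2 _] _]] := GammaE D v a.
    have Hw : ext2 v w by rewrite Ew; apply/ext2_to3.
    have : Gamma D v a = Some (w a) by rewrite E {1}Ew /to3 ffunE.
    case: (w a) => Ga.
    * have := H1 Ga w Hw; by case: (feval w (acc D a)).
    * by apply/negbTE; exact: (H2 Ga w Hw).
  + case=> T H; apply/andP; split=> //; apply/eqP/ffunP=> a.
    have [w Ew] := two_to3 T.
    have [[_ H1] [[_ H2] _]] := GammaE D v a.
    have Hw' : forall w', ext2 v w' -> w' = w by move=> w'; rewrite Ew => /ext2_to3.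
    transitivity (Some (w a)); last by rewrite Ew /to3 ffunE.
    have := H w Ew a; case: (w a) => Hg.
    * by apply: H1 => w' /Hw' ->.
    * by apply: H2 => w' /Hw' ->; rewrite Hg.
Qed.

Lemma key2 s (f : interp2 A -> interp2 A) V :
  is_char s f V <-> forall v, v \in V <-> P s (fun w a => f w a) v.
Proof.
case: s => //=; rewrite /mod_char /Pmod; split.
- case=> H1 H2 v; split.
  + move=> Hv; split; first exact: H1.
    by move=> w Ew a; rewrite Ew in Hv; move/H2: Hv => ->.
  + case=> T H; have [w Ew] := two_to3 T; rewrite Ew; apply/H2.
    by apply/ffunP=> a; apply: H.
- move=> H; split; first by move=> v /H [].
  move=> w; split.
  + by move/H=> [_ Hw]; apply/ffunP=> a; apply: Hw.
  + move=> E; apply/H; split; first exact: to3_two.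
    move=> w' Ew a.
    have -> : w' = w by apply/ext2_to3; rewrite Ew; apply/ext2_to3.
    by rewrite E.
Qed.

Definition lit (w : interp2 A) : formula A :=
  foldr (@FAnd A) (FTop A) [seq if w b then FAtom b else FNeg (FAtom b) | b <- enum A].

Lemma feval_lit w' w : feval w' (lit w) = (w' == w).
Proof.
rewrite /lit.
have -> : feval w' (foldr (@FAnd A) (FTop A)
    [seq if w b then FAtom b else FNeg (FAtom b) | b <- enum A])
    = all (fun b => w' b == w b) (enum A).
  elim: (enum A) => //= b s ->.
  by case: (w b) => /=; case: (w' b).
apply/allP/eqP.
- by move=> H; apply/ffunP=> b; apply/eqP; apply: H; rewrite mem_enum.
- by move=> -> b _.
Qed.

Definition form (g : interp2 A -> A -> bool) (a : A) : formula A :=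
  foldr (@FOr A) (FBot A) [seq lit w | w <- enum (interp2 A) & g w a].

Lemma feval_form g a w' : feval w' (form g a) = g w' a.
Proof.
rewrite /form.
have -> : forall s, feval w' (foldr (@FOr A) (FBot A) [seq lit w | w <- s & g w a])
    = has (fun w => g w a && (w' == w)) s.
  elim=> //= w s IH; case: (g w a) => /=; rewrite ?IH // feval_lit //.
apply/hasP; case: ifP => Hg.
- by exists w'; rewrite ?mem_enum ?Hg ?eqxx.
- by case=> w _ /andP [Hw /eqP E]; rewrite E Hw in Hg.
Qed.

Definition mkD (g : interp2 A -> A -> bool) : ADF A :=
  @MkADF A (fun _ _ => true) (form g) (fun _ _ _ => isT).

End S.

Theorem theorem1 (A : finType) (V : {set interp A}) (s : semantics) :
  (exists D : ADF A, sem s D = V) <-> (exists f : interp2 A -> interp2 A, is_char s f V).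
Proof.
split.
- case=> D <-; exists (fun w => [ffun a => feval w (acc D a)]).
  apply/key2=> v.
  have HE : (fun w (b : A) => [ffun a => feval w (acc D a)] b) =2 gD D.
    by move=> w a; rewrite ffunE.
  have := P_ext s v HE; have := key s D v; tauto.
- case=> f /key2 H; exists (mkD (fun w a => f w a)); apply/setP=> v.
  have HE : gD (mkD (fun w a => f w a)) =2 (fun w a => f w a).
    by move=> w a; rewrite /gD feval_form.
  have := P_ext s v HE; have := key s (mkD (fun w a => f w a)) v; have := H v.
  move=> H1 H2 H3; apply/idP/idP; tauto.
Qed.
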